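(* Let $p \equiv 1 \pmod 8$ and $q \equiv 3 \pmod 4$ be primes with $\left(\frac{p}{q}\right) = +1$. For a nonzero squarefree integer $b_1$ dividing $-4pq^2$, let $\mathcal{T}(b_1)$ denote the curve $$N^2 = b_1 M^4 - \frac{4pq^2}{b_1} e^4,$$ and call a rational point $(M,e,N)\in\mathbb{Q}^3$ on it nontrivial if $(M,e) \neq (0,0)$. Then: (a) if $\mathcal{T}(b_1)$ has a nontrivial rational point for some $b_1 \in \{2, -2, -2p, 2p\}$, then $\left(\frac{2}{p}\right)_4 = +1$; (b) if $\mathcal{T}(b_1)$ has a nontrivial rational point for some $b_1 \in \{q, -q, -pq, pq\}$, then $\left(\frac{q}{p}\right)_4 = +1$; (c) if $\mathcal{T}(b_1)$ has a nontrivial rational point for some $b_1 \in \{2q, -2q, -2pq, 2pq\}$, then $\left(\frac{2q}{p}\right)_4 = +1$.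
   Context: For a prime $p \equiv 1 \pmod 8$ and an integer $c$ that is a nonzero quadratic residue modulo $p$, the quartic residue symbol $\left(\frac{c}{p}\right)_4 \in \{\pm 1\}$ is defined by $\left(\frac{c}{p}\right)_4 \equiv c^{(p-1)/4} \pmod p$; it equals $+1$ iff $c$ is a fourth power modulo $p$. (Under the hypotheses, $2$, $q$ and $2q$ are quadratic residues modulo $p$.) The curves $\mathcal{T}(b_1)$ are the 2-isogeny descent torsors for the elliptic curve $y^2 = x(x^2 - 4pq^2)$; the paper states the result as a table listing, for each $b_1 \in\{2,-2,q,-q,2q,-2q\}$, the torsors $\mathcal{T}(b_1)$ and $\mathcal{T}(-pb_1)$ together with the corresponding condition. *)

(* Defs.v *)
From mathcomp Require Import all_boot all_order all_algebra.
Set Implicit Arguments. Unset Strict Implicit. Unset Printing Implicit Defensive.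
Import Order.TTheory GRing.Theory Num.Theory.

Definition legendre_is_one (a q : nat) : Prop :=
  ~~ (q %| a) /\ exists x : nat, x ^ 2 = a %[mod q].

Definition quartic_is_one (c p : nat) : Prop :=
  c ^ ((p - 1) %/ 4) = 1 %[mod p].

Definition T_has_nontrivial_point (p q : nat) (b1 : int) : Prop :=
  exists M e N : rat, (M, e) != (0%R, 0%R) /\
    (N ^+ 2 = b1%:~R * M ^+ 4 - (4 * p%:R * q%:R ^+ 2 / b1%:~R) * e ^+ 4)%R.

(* Main.v *)
Require Import Defs.
From mathcomp Require Import all_boot all_order all_algebra all_fingroup all_solvable all_field.
From mathcomp Require Import ring zify.
Set Implicit Arguments. Unset Strict Implicit. Unset Printing Implicit Defensive.
Import Order.TTheory GRing.Theory Num.Theory.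
Local Open Scope ring_scope.
Lemma fin_prim_root (F : finFieldType) (d : nat) :
  (0 < d)%N -> (d %| #|F|.-1)%N -> exists z : F, d.-primitive_root z.
Proof.
move=> d0 dd.
have F1 := finNzRing_gt1 F.
have N0 : (0 < #|F|.-1)%N by rewrite -ltnS prednK // ltnW.
have : has (primitive_root_of_unity #|F|.-1) (enum (predC1 (0 : F))).
  apply: has_prim_root => //.
  - apply/allP=> x; rewrite mem_enum /= => x0.
    rewrite unity_rootE; apply/eqP; apply: (mulIf x0).
    by rewrite mul1r -exprSr prednK ?expf_card // ltnW.
  - exact: enum_uniq.
  - by rewrite -cardE cardC1.
case/hasP=> z _ zp; exists (z ^+ (#|F|.-1 %/ d)).
exact: dvdn_prim_root.
Qed.
Lemma Fp_fermat (p : nat) (x : 'F_p) : prime p -> x != 0 -> x ^+ p.-1 = 1.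
Proof.
move=> pp x0; apply: (mulIf x0); rewrite mul1r -exprSr prednK ?prime_gt0 //.
by have := expf_card x; rewrite card_Fp.
Qed.

Lemma Fp_nat_eq0 (p n : nat) : prime p -> ((n%:R : 'F_p) == 0) = (p %| n)%N.
Proof. by move=> pp; rewrite (dvdn_pcharf (pchar_Fp pp)). Qed.

Lemma two_QR (p t : nat) : prime p -> p.-1 = (t * 8)%N -> (2%:R : 'F_p) ^+ (t * 4) = 1.
Proof.
move=> pp pt.
have p2 : p != 2%N by apply/eqP=> e; move: pt; rewrite e /=; case: t => [|t] //; rewrite mulSn.
have [w w8] : exists w : 'F_p, 8.-primitive_root w.
  apply: fin_prim_root => //; rewrite card_Fp // pt; exact: dvdn_mull.
have e8 : w ^+ 8 = 1 := prim_expr_order w8.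
have e4 : w ^+ 4 = -1.
  have : (w ^+ 4) ^+ 2 == 1 by rewrite -exprM e8.
  rewrite sqrf_eq1 => /orP[] /eqP // e.
  by have := prim_order_dvd w8 4; rewrite e eqxx.
pose y := w + w ^+ 7.
have ey : y ^+ 2 = 2%:R.
  apply/eqP; rewrite -subr_eq0; apply/eqP.
  have -> : y ^+ 2 - 2%:R = w ^+ 2 * (1 + w ^+ 4) + (2%:R + w ^+ 6) * (w ^+ 8 - 1) by rewrite /y; ring.
  by rewrite e4 e8; ring.
have two0 : (2%:R : 'F_p) != 0.
  by rewrite Fp_nat_eq0 // dvdn_prime2 // eq_sym.
have y0 : y != 0 by apply: contraNneq two0 => y0; rewrite -ey y0 expr0n.
by rewrite -ey -exprM (_ : (2 * (t * 4) = p.-1)%N) ?Fp_fermat // pt; lia.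
Qed.
Lemma Fp_val_nat (p : nat) (a : 'F_p) : ((a : nat)%:R : 'F_p) = a.
Proof. exact: natr_Zp. Qed.

Lemma recip (p r h : nat) : prime p -> prime r -> r != 2%N -> r != p ->
  p.-1 = (h * 2)%N -> ~~ odd h -> (exists x : nat, x ^ 2 = p %[mod r]) ->
  (r%:R : 'F_p) ^+ h = 1.
Proof.
move=> pp pr r2 rp ph he [x hx].
have p1 : (1 < p)%N := prime_gt1 pp.
have h0 : (0 < h)%N by move: ph p1; lia.
have hlt : (h < p.-1)%N by rewrite ph; lia.
have [F charF cardF] := pPrimePowerField pr (leq_trans h0 (ltnW hlt)).
have rp0 : (r%:R : 'F_p) != 0.
  by rewrite Fp_nat_eq0 // dvdn_prime2 // eq_sym.
have pdiv : (p %| #|F|.-1)%N.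
  rewrite cardF -Fp_nat_eq0 //.
  have : (((r ^ p.-1).-1.+1)%:R : 'F_p) = 1.
    by rewrite prednK ?expn_gt0 ?prime_gt0 // natrX Fp_fermat.
  rewrite -[((r ^ p.-1).-1).+1]addn1 natrD => H.
  by apply/eqP; apply: (@addIr _ 1); rewrite H add0r.
have [z zp] := fin_prim_root (prime_gt0 pp) pdiv.
pose chi (a : 'F_p) : F := if a == 0 then 0 else if a ^+ h == 1 then 1 else -1.
pose e (a : 'F_p) : F := z ^+ (a : nat).
have eN n : e (n%:R) = z ^+ n by rewrite /e val_Fp_nat // prim_expr_mod.
have eD a b : e (a + b) = e a * e b.
  by rewrite -(Fp_val_nat a) -(Fp_val_nat b) -natrD !eN exprD.
have e0 : e 0 = 1 by rewrite -(mulr0n (1 : 'F_p)) eN expr0.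
have z1 : z != 1.
  apply/negP => /eqP z1'; have := prim_order_dvd zp 1.
  by rewrite expr1 z1' eqxx dvdn1 => /eqP p1'; rewrite p1' in p1.
have sum_e : \sum_(a : 'F_p) e a = 0.
  have : (\sum_(a : 'F_p) e a) * z = \sum_(a : 'F_p) e a.
    rewrite mulr_suml [RHS](reindex_inj (addIr (1 : 'F_p))) /=.
    by apply: eq_bigr => a _; rewrite eD -(mulr1n (1 : 'F_p)) eN expr1.
  move/eqP; rewrite -subr_eq0 -[X in _ - X]mulr1 -mulrBr mulf_eq0 subr_eq0 (negPf z1) orbF.
  by move/eqP.
have S (t : 'F_p) : \sum_(a : 'F_p) e (a * t) = if t == 0 then p%:R else 0.
  case: eqP => [->|/eqP t0].
    under eq_bigr do rewrite mulr0 e0.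
    by rewrite sumr_const card_Fp.
  have inj := mulIf t0.
  by rewrite -[RHS]sum_e [RHS](reindex_inj inj).
have p2 : p != 2%N by apply/eqP=> e2; move/(congr1 odd): ph; rewrite e2 /= oddM andbF.
have m1p : (-1 : 'F_p) != 1.
  apply/eqP => e1; have : (2%:R : 'F_p) == 0.
    by rewrite mulr2n -{1}e1 addNr.
  by rewrite Fp_nat_eq0 // dvdn_prime2 // (negPf p2).
have two0F : (2%:R : F) != 0 by rewrite -(dvdn_pcharf charF) dvdn_prime2 // (negPf r2).
have m1F : (-1 : F) != 1.
  apply/eqP => e1; move/eqP: two0F; apply.
  by rewrite mulr2n -{1}e1 addNr.
have euler (a : 'F_p) : a != 0 -> (a ^+ h = 1) \/ (a ^+ h = -1).
  move=> a0; have : (a ^+ h) ^+ 2 == 1 by rewrite -exprM -ph Fp_fermat.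
  by rewrite sqrf_eq1 => /orP[] /eqP; [left|right].
have chiE (a : 'F_p) : a != 0 -> a ^+ h = 1 -> chi a = 1.
  by move=> a0 ah; rewrite /chi (negPf a0) ah eqxx.
have chiE' (a : 'F_p) : a != 0 -> a ^+ h = -1 -> chi a = -1.
  by move=> a0 ah; rewrite /chi (negPf a0) ah (negPf m1p).
have chi0 : chi 0 = 0 by rewrite /chi eqxx.
have chiM (a b : 'F_p) : chi (a * b) = chi a * chi b.
  have [->|a0] := eqVneq a 0; first by rewrite mul0r chi0 mul0r.
  have [->|b0] := eqVneq b 0; first by rewrite mulr0 chi0 mulr0.
  have ab0 : a * b != 0 by rewrite mulf_neq0.
  case: (euler a a0) => ea; case: (euler b b0) => eb.
  - by rewrite (chiE a) ?(chiE b) ?(chiE (a * b)) ?mulr1 // exprMn ea eb mulr1.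
  - by rewrite (chiE a) ?(chiE' b) ?(chiE' (a * b)) ?mul1r // exprMn ea eb mul1r.
  - by rewrite (chiE' a) ?(chiE b) ?(chiE' (a * b)) ?mulr1 // exprMn ea eb mulr1.
  - by rewrite (chiE' a) ?(chiE' b) ?(chiE (a * b)) ?mulrNN ?mulr1 // exprMn ea eb mulrNN mulr1.
have chi_sq (a : 'F_p) : a != 0 -> chi a * chi a = 1.
  move=> a0; case: (euler a a0) => ea.
  - by rewrite (chiE a) // mulr1.
  - by rewrite (chiE' a) // mulrNN mulr1.
have chim1 : chi (-1) = 1.
  apply: chiE; first by rewrite oppr_eq0 oner_eq0.
  by rewrite -signr_odd (negPf he).
have [n0 n0e] : exists n0 : 'F_p, chi n0 = -1.
  have [w wp] : exists w : 'F_p, (p.-1).-primitive_root w.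
    by apply: fin_prim_root; rewrite ?card_Fp // -ltnS prednK ?prime_gt0.
  have w0 : w != 0 by rewrite (prim_root_eq0 wp) -lt0n -ltnS prednK ?prime_gt0.
  exists w; apply: chiE' => //; case: (euler w w0) => // ew.
  have := prim_order_dvd wp h; rewrite ew eqxx => /(dvdn_leq h0); rewrite leqNgt hlt //.
have sum_chi : \sum_(a : 'F_p) chi a = 0.
  have n00 : n0 != 0 by apply/eqP => e0'; move: n0e; rewrite e0' chi0 => /eqP; rewrite eq_sym oppr_eq0 oner_eq0.
  have inj := mulfI n00.
  have : \sum_(a : 'F_p) chi a = - \sum_(a : 'F_p) chi a.
    rewrite {1}(reindex_inj inj) /= -mulN1r mulr_sumr.
    by apply: eq_bigr => a _; rewrite chiM n0e.
  move/eqP; rewrite -subr_eq0 opprK -mulr2n -mulr_natr mulf_eq0 (negPf two0F) orbF.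
  by move/eqP.
pose g := \sum_(a : 'F_p) chi a * e a.
have eNM (a : 'F_p) (n : nat) : e (a * n%:R) = e a ^+ n.
  by rewrite -(Fp_val_nat a) -natrM !eN exprM.
have g2 : g * g = p%:R.
  have step (a : 'F_p) : chi a * e a * g = \sum_(c : 'F_p) chi c * e (a * (1 + c)).
    have [->|a0] := eqVneq a 0.
      rewrite chi0 !mul0r; under eq_bigr do rewrite mul0r e0 mulr1.
      by rewrite sum_chi.
    have inj := mulfI a0.
    rewrite /g [in LHS](reindex_inj inj) /= mulr_sumr; apply: eq_bigr => c _.
    rewrite chiM mulrDr mulr1 eD -[in RHS](mul1r (chi c)) -(chi_sq a a0).
    ring.
  rewrite {1}/g mulr_suml (eq_bigr _ (fun a _ => step a)) exchange_big /=.
  under eq_bigr do rewrite -mulr_sumr S.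
  rewrite (bigD1 (-1)) //= big1 ?addr0.
    by rewrite addrN eqxx chim1 mul1r.
  move=> c hc; rewrite addrC addr_eq0 (negPf hc) mulr0 //.
have fr_chi a : pFrobenius_aut charF (chi a) = chi a.
  rewrite /chi; case: ifP => _; first exact: pFrobenius_aut0.
  by case: ifP => _; rewrite ?pFrobenius_autN pFrobenius_aut1.
have gr : g ^+ r = \sum_(a : 'F_p) chi a * e (a * r%:R).
  rewrite -(pFrobenius_autE charF) rmorph_sum; apply: eq_bigr => a _.
  by rewrite rmorphM /= fr_chi pFrobenius_autE eNM.
have ginv : g = chi (r%:R) * g ^+ r.
  have inj := mulIf rp0.
  rewrite gr mulr_sumr /g [in LHS](reindex_inj inj) /=; apply: eq_bigr => a _.
  rewrite chiM; ring.
pose X : F := x%:R.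
have hX : X ^+ 2 = p%:R.
  by rewrite /X -natrX -(GRing.natr_mod_pchar charF (x ^ 2)) hx GRing.natr_mod_pchar.
have g0 : g != 0.
  apply/eqP => g0'; move: g2; rewrite g0' mul0r => /esym/eqP.
  by rewrite -(dvdn_pcharf charF) dvdn_prime2 // (negPf rp).
have gX : g = X \/ g = - X.
  have : (g - X) * (g + X) == 0 by rewrite -subr_sqr expr2 g2 hX subrr.
  rewrite mulf_eq0 subr_eq0 addr_eq0 => /orP[] /eqP; [left|right] => //.
have grg : g ^+ r = g.
  rewrite -(pFrobenius_autE charF).
  by case: gX => ->; rewrite /X ?pFrobenius_autN pFrobenius_aut_nat.
have chiR : chi (r%:R) = 1.
  apply: (mulIf g0); rewrite mul1r {2}ginv grg //.
case: (euler _ rp0) => // eR.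
by move: chiR; rewrite (chiE' _ rp0 eR) => /eqP; rewrite (negPf m1F).
Qed.

Lemma prod_QR (p h N : nat) : (0 < N)%N ->
  (forall r, prime r -> (r %| N)%N -> (r%:R : 'F_p) ^+ h = 1) -> (N%:R : 'F_p) ^+ h = 1.
Proof.
elim/ltn_ind: N => N IH N0 H.
have [N1|N1] := leqP N 1.
  have -> : N = 1%N by lia.
  by rewrite expr1n.
have pr := pdiv_prime N1.
have dv := pdiv_dvd N.
have d0 := prime_gt0 pr.
have eN : N = (pdiv N * (N %/ pdiv N))%N by rewrite mulnC divnK.
have M0 : (0 < N %/ pdiv N)%N by rewrite divn_gt0 // dvdn_leq // ltnW.
have HM : (N %/ pdiv N < N)%N.
  by rewrite ltn_Pdiv // prime_gt1.
have -> : (N%:R : 'F_p) = (pdiv N)%:R * (N %/ pdiv N)%N%:R by rewrite -natrM -eN.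
rewrite exprMn (H (pdiv N)) // (IH (N %/ pdiv N)%N) ?mul1r //.
move=> r pr' rd; apply: H => //; apply: dvdn_trans rd _.
by apply: dvdn_div.
Qed.

Lemma quartic_core (p t k : nat) (n c u eps : 'F_p) : prime p -> p.-1 = (t * 8)%N ->
  (eps = 1 \/ eps = -1) -> k%:R * n ^+ 2 = eps * c ^+ 2 * u ^+ 4 -> u != 0 ->
  c ^+ (t * 4) = 1 -> n ^+ (t * 4) = 1 -> (k%:R : 'F_p) ^+ (t * 2) = 1.
Proof.
move=> pp pt he E u0 hc hn.
have L : (k%:R * n ^+ 2) ^+ (t * 2) = (k%:R : 'F_p) ^+ (t * 2).
  rewrite exprMn -exprM (_ : (2 * (t * 2) = t * 4)%N) ?hn ?mulr1 //; lia.
have R : (eps * c ^+ 2 * u ^+ 4) ^+ (t * 2) = 1.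
  rewrite exprMn exprMn -!exprM (_ : (2 * (t * 2) = t * 4)%N) ?hc ?mulr1; last lia.
  rewrite (_ : (4 * (t * 2) = p.-1)%N) ?Fp_fermat ?mulr1; last lia; last done; last done.
  by case: he => ->; rewrite ?expr1n // mulnC exprM sqrrN !expr1n.
by rewrite -L E R.
Qed.


Lemma Fp_int_eq0 (p : nat) (z : int) : prime p -> ((z%:~R : 'F_p) == 0) = (p %| `|z|)%N.
Proof.
move=> pp; case: z => [n|n]; first by rewrite Fp_nat_eq0.
by rewrite NegzE mulrNz oppr_eq0 Fp_nat_eq0.
Qed.

Lemma intr_even (R : pzRingType) (z : int) (j : nat) :
  (z%:~R : R) ^+ (j * 2) = (`|z|%:R) ^+ (j * 2).
Proof.
case: z => [n|n] //.
by rewrite NegzE mulrNz mulnC exprM sqrrN -exprM.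
Qed.

Lemma map_eqn (R : comPzRingType) (k : nat) (n a b m f : int) :
  k%:Z * n ^+ 2 = a * m ^+ 4 + b * f ^+ 4 ->
  (k%:R : R) * (n%:~R) ^+ 2 = a%:~R * (m%:~R) ^+ 4 + b%:~R * (f%:~R) ^+ 4.
Proof.
move/(congr1 (fun z : int => (z%:~R : R))).
by rewrite rmorphD !rmorphM /=.
Qed.

Lemma QR_from_eq (p q r : nat) (w a b m f n : int) (k : nat) :
  prime p -> prime q -> prime r -> r != 2%N -> r != p -> r != q ->
  (w = q%:Z \/ w = 2 \/ w = 1) ->
  (a = 1 \/ a = -1 \/ a = p%:Z \/ a = - p%:Z) ->
  a * b = - (p%:Z * w ^+ 2) ->
  (forall s : nat, prime s -> (s %| `|m|)%N -> (s %| `|f|)%N -> False) ->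
  k%:Z * n ^+ 2 = a * m ^+ 4 + b * f ^+ 4 ->
  (r %| `|n|)%N ->
  exists x : nat, (x ^ 2 = p %[mod r])%N.
Proof.
move=> pp pq pr r2 rp rq hw ha hab cop E rn.
have := map_eqn 'F_r E.
have -> : (n%:~R : 'F_r) = 0 by apply/eqP; rewrite Fp_int_eq0.
rewrite expr0n mulr0 /= => /esym E'.
have a0 : (a%:~R : 'F_r) != 0.
  rewrite Fp_int_eq0 //.
  have r1 : (r %| 1)%N = false by rewrite dvdn1; apply/negP => /eqP r1; rewrite r1 in pr.
  have rp' : (r %| p)%N = false by rewrite dvdn_prime2 // (negPf rp).
  by case: ha => [->|[->|[->|->]]]; rewrite ?abszN /= ?r1 ?rp'.
have w0 : (w%:~R : 'F_r) != 0.
  rewrite Fp_int_eq0 //.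
  have r1 : (r %| 1)%N = false by rewrite dvdn1; apply/negP => /eqP r1; rewrite r1 in pr.
  have rq' : (r %| q)%N = false.
    by rewrite dvdn_prime2 // (negPf rq).
  case: hw => [->|[->|->]] /=; rewrite ?rq' ?r1 //.
  by rewrite dvdn_prime2 // (negPf r2).
have f0 : (f%:~R : 'F_r) != 0.
  apply/negP => /eqP f0; move: E'; rewrite f0 expr0n mulr0 addr0 => /eqP.
  rewrite mulf_eq0 (negPf a0) /= expf_eq0 /= => /eqP m0.
  apply: (cop r pr); rewrite -Fp_int_eq0 //; apply/eqP => //.
have AB : (a%:~R : 'F_r) * b%:~R = - (p%:R * (w%:~R) ^+ 2).
  by move/(congr1 (fun z : int => (z%:~R : 'F_r))): hab; rewrite rmorphN !rmorphM.
pose y : 'F_r := a%:~R * (m%:~R) ^+ 2 / ((w%:~R) * (f%:~R) ^+ 2).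
have hy : y ^+ 2 = p%:R.
  have wf0 : (w%:~R : 'F_r) ^+ 2 * (f%:~R) ^+ 4 != 0 by rewrite mulf_neq0 ?expf_neq0.
  apply: (mulIf wf0).
  have -> : y ^+ 2 * ((w%:~R) ^+ 2 * (f%:~R) ^+ 4) = (a%:~R) * ((a%:~R) * (m%:~R) ^+ 4).
    by rewrite /y; field; rewrite f0 w0.
  have -> : (a%:~R : 'F_r) * (m%:~R) ^+ 4 = - (b%:~R * (f%:~R) ^+ 4).
    by apply/eqP; rewrite -addr_eq0 E'.
  by rewrite mulrN mulrA AB mulNr opprK; ring.
exists (nat_of_ord y).
have : (((nat_of_ord y) ^ 2)%:R : 'F_r) = p%:R by rewrite natrX Fp_val_nat.
by move/(congr1 (@nat_of_ord _)); rewrite !val_Fp_nat.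
Qed.


Lemma intrXn (R : pzRingType) (z : int) (j : nat) : ((z ^+ j)%:~R : R) = (z%:~R) ^+ j.
Proof. by elim: j => [|j IH]; rewrite ?expr0 // !exprS intrM IH. Qed.

Lemma gen (p q k : nat) (w a b m f n eps : int) :
  prime p -> prime q -> (p %% 8 = 1)%N -> (q %% 4 = 3)%N -> legendre_is_one p q ->
  (k = 2 \/ k = q \/ k = 2 * q)%N ->
  (w = q%:Z \/ w = 2 \/ w = 1) ->
  (eps = 1 \/ eps = -1) ->
  ((a = eps /\ b = - (eps * p%:Z * w ^+ 2)) \/ (a = - (eps * p%:Z) /\ b = eps * w ^+ 2)) ->
  (forall s : nat, prime s -> (s %| `|m|)%N -> (s %| `|f|)%N -> False) ->
  k%:Z * n ^+ 2 = a * m ^+ 4 + b * f ^+ 4 ->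
  quartic_is_one k p.
Proof.
move=> pp pq p8 q4 leg hk hw he hab cop E.
have p1 := prime_gt1 pp.
have q1 := prime_gt1 pq.
pose t := (p %/ 8)%N.
have pt : p.-1 = (t * 8)%N by move: (divn_eq p 8); rewrite p8 /t; lia.
have tpos : (0 < t)%N by clear -pt p1; lia.
have p4 : ((p - 1) %/ 4 = t * 2)%N.
  by rewrite (_ : (p - 1 = t * 2 * 4)%N) ?mulnK //; lia.
have p2 : p != 2%N by apply/eqP => e2; rewrite e2 in p8.
have pq' : p != q.
  apply/eqP => epq; move: p8 q4; rewrite epq => h8 h4.
  by move: (divn_eq q 8) (divn_eq q 4); rewrite h8 h4; lia.
have q2 : q != 2%N by apply/eqP => e2; rewrite e2 in q4.
have ph : p.-1 = ((t * 4) * 2)%N by rewrite pt -mulnA.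
have he4 : ~~ odd (t * 4) by rewrite oddM andbF.
have Hrec r : prime r -> r != 2%N -> r != p -> (exists x : nat, (x ^ 2 = p %[mod r])%N) ->
    (r%:R : 'F_p) ^+ (t * 4) = 1.
  by move=> pr r2 rp hx; apply: recip.
have H2 : (2%:R : 'F_p) ^+ (t * 4) = 1 := two_QR pp pt.
have Hq : (q%:R : 'F_p) ^+ (t * 4) = 1.
  by apply: Hrec => //; [rewrite eq_sym | case: leg].
have ab : a * b = - (p%:Z * w ^+ 2) by case: hab => -[-> ->]; case: he => ->; ring.
have ha : a = 1 \/ a = -1 \/ a = p%:Z \/ a = - p%:Z.
  by case: hab => -[-> _]; case: he => ->; rewrite ?mul1r ?mulN1r ?opprK; tauto.
have EF := map_eqn 'F_p E.
have pF : ((p%:Z)%:~R : 'F_p) = 0 by apply/eqP; rewrite Fp_int_eq0 //= dvdnn.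
have kF : (k%:R : 'F_p) != 0.
  rewrite Fp_nat_eq0 //; case: hk => [->|[->|->]].
  - by rewrite dvdn_prime2 // (negPf p2).
  - by rewrite dvdn_prime2 // (negPf pq').
  - by rewrite Euclid_dvdM // !dvdn_prime2 // (negPf p2) (negPf pq').
have wF : (w%:~R : 'F_p) != 0.
  rewrite Fp_int_eq0 //; case: hw => [->|[->|->]] /=.
  - by rewrite dvdn_prime2 // (negPf pq').
  - by rewrite dvdn_prime2 // (negPf p2).
  - by rewrite dvdn1; apply/negP => /eqP p1'; rewrite p1' in pp.
have wh : (w%:~R : 'F_p) ^+ (t * 4) = 1.
  by case: hw => [->|[->|->]] //=; rewrite expr1n.
have eF : (eps%:~R : 'F_p) = 1 \/ (eps%:~R : 'F_p) = -1.
  by case: he => ->; [left | right].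
have epsF : (eps%:~R : 'F_p) != 0.
  by case: eF => ->; rewrite ?oppr_eq0 oner_eq0.
have key : exists u c : 'F_p, [/\ u != 0, c ^+ (t * 4) = 1 &
    k%:R * (n%:~R) ^+ 2 = eps%:~R * c ^+ 2 * u ^+ 4].
  case: hab => -[ea eb].
  - have bF : (b%:~R : 'F_p) = 0 by rewrite eb intrN !intrM pF mulr0 mul0r oppr0.
    have mF : (m%:~R : 'F_p) != 0.
      apply/negP => /eqP m0.
      have nF : (n%:~R : 'F_p) = 0.
        move: EF; rewrite bF m0 expr0n mulr0 mul0r addr0 => /eqP.
        by rewrite mulf_eq0 (negPf kF) /= expf_eq0 /= => /eqP.
      have hm : (p %| `|m|)%N by rewrite -Fp_int_eq0 // m0.
      have hn : (p %| `|n|)%N by rewrite -Fp_int_eq0 // nF.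
      have /dvdzP [m1 em] : (p%:Z %| m)%Z := hm.
      have /dvdzP [n1 en] : (p%:Z %| n)%Z := hn.
      have X0 : k%:Z * n1 ^+ 2 * p%:Z - eps * m1 ^+ 4 * p%:Z ^+ 3 + eps * w ^+ 2 * f ^+ 4 = 0.
        have : p%:Z * (k%:Z * n1 ^+ 2 * p%:Z - eps * m1 ^+ 4 * p%:Z ^+ 3 + eps * w ^+ 2 * f ^+ 4) = 0.
          rewrite (_ : p%:Z * _ = k%:Z * n ^+ 2 - (a * m ^+ 4 + b * f ^+ 4)); first by rewrite E subrr.
          by rewrite en em ea eb; ring.
        by move/eqP; rewrite mulf_eq0 /= => /orP[/eqP p0|/eqP //]; move: p0 p1 => [->].
      move/(congr1 (fun z : int => (z%:~R : 'F_p))): X0.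
      rewrite intrD intrB !intrM pF !mulr0 subr0 add0r (_ : (0%:~R : 'F_p) = 0) // => /eqP.
      rewrite !mulf_eq0 (negPf epsF) (negPf wF) /= !orbb => /eqP f0.
      by apply: (cop p pp hm); rewrite -Fp_int_eq0 // f0.
    exists (m%:~R), 1; split => //; first by rewrite expr1n.
    by rewrite EF bF mul0r addr0 ea expr1n mulr1.
  - have aF : (a%:~R : 'F_p) = 0 by rewrite ea intrN !intrM pF mulr0 oppr0.
    have fF : (f%:~R : 'F_p) != 0.
      apply/negP => /eqP f0.
      have nF : (n%:~R : 'F_p) = 0.
        move: EF; rewrite aF f0 expr0n !mulr0 mul0r addr0 => /eqP.
        by rewrite mulf_eq0 (negPf kF) /= expf_eq0 /= => /eqP.
      have hf : (p %| `|f|)%N by rewrite -Fp_int_eq0 // f0.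
      have hn : (p %| `|n|)%N by rewrite -Fp_int_eq0 // nF.
      have /dvdzP [f1 ef] : (p%:Z %| f)%Z := hf.
      have /dvdzP [n1 en] : (p%:Z %| n)%Z := hn.
      have X0 : k%:Z * n1 ^+ 2 * p%:Z + eps * m ^+ 4 - eps * w ^+ 2 * f1 ^+ 4 * p%:Z ^+ 3 = 0.
        have : p%:Z * (k%:Z * n1 ^+ 2 * p%:Z + eps * m ^+ 4 - eps * w ^+ 2 * f1 ^+ 4 * p%:Z ^+ 3) = 0.
          rewrite (_ : p%:Z * _ = k%:Z * n ^+ 2 - (a * m ^+ 4 + b * f ^+ 4)); first by rewrite E subrr.
          by rewrite en ef ea eb; ring.
        by move/eqP; rewrite mulf_eq0 /= => /orP[/eqP p0|/eqP //]; move: p0 p1 => [->].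
      move/(congr1 (fun z : int => (z%:~R : 'F_p))): X0.
      rewrite intrB intrD !intrM pF !mulr0 subr0 add0r (_ : (0%:~R : 'F_p) = 0) // => /eqP.
      rewrite !mulf_eq0 (negPf epsF) /= !orbb => /eqP m0.
      by apply: (cop p pp _ hf); rewrite -Fp_int_eq0 // m0.
    exists (f%:~R), (w%:~R); split => //.
    by rewrite EF aF mul0r add0r eb intrM intrXn.
case: key => u [c [u0 ch Eq]].
have c0 : c != 0.
  apply/negP => /eqP c0; move: ch; rewrite c0 expr0n.
  rewrite (_ : (t * 4 == 0)%N = false) ?(negPf (oner_neq0 _)) //.
  by rewrite muln_eq0 orbF; apply/negP => /eqP t0; rewrite t0 in tpos.
have nF : (n%:~R : 'F_p) != 0.
  apply/negP => /eqP n0; move: Eq; rewrite n0 expr0n mulr0 => /esym/eqP.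
  by rewrite (negPf (mulf_neq0 (mulf_neq0 epsF (expf_neq0 _ c0)) (expf_neq0 _ u0))).
have Hn : (n%:~R : 'F_p) ^+ (t * 4) = 1.
  have -> : (t * 4 = (t * 2) * 2)%N by rewrite -mulnA.
  rewrite intr_even -mulnA.
  apply: prod_QR.
    by rewrite absz_gt0; apply: contraNneq nF => ->.
  move=> r pr rn.
  have [->|r2] := eqVneq r 2%N; first exact: H2.
  have [->|rq] := eqVneq r q; first exact: Hq.
  have [erp|rp] := eqVneq r p.
    by move: nF; rewrite Fp_int_eq0 // -erp rn.
  apply: Hrec => //.
  exact: (QR_from_eq (k := k) pp pq pr r2 rp rq hw ha ab cop E rn).
have := quartic_core pp pt eF Eq u0 ch Hn.
rewrite /quartic_is_one p4 -natrX => /(congr1 (@nat_of_ord _)).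
by rewrite !val_Fp_nat // (modn_small p1) => ->.
Qed.


Lemma rat_sq_int (x : rat) (z : int) : x ^+ 2 = z%:~R -> x = (numq x)%:~R.
Proof.
move=> hx.
have d0 : 0 < denq x := denq_gt0 x.
have E : numq x ^+ 2 = z * denq x ^+ 2.
  apply: (@intr_inj rat); rewrite intrXn intrM intrXn numqE exprMn hx.
  by [].
have : (`|denq x| %| `|numq x| ^ 2)%N.
  by rewrite -abszX E abszM abszX dvdn_mull // expnS dvdn_mulr.
have cop : coprime (`|numq x| ^ 2) `|denq x|.
  by rewrite coprimeXl // coprime_num_den.
move/gcdn_idPr; rewrite (eqP cop) => d1.
have dq : denq x = 1.
  by apply/eqP; rewrite -[denq x]gez0_abs ?ltW // -d1.
by rewrite numqE dq mulr1.
Qed.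

Lemma T_int (p q : nat) (b1 c : int) :
  ((4 * p%:R * q%:R ^+ 2 / b1%:~R) : rat) = - c%:~R ->
  T_has_nontrivial_point p q b1 ->
  exists m f N : int, (forall s : nat, prime s -> (s %| `|m|)%N -> (s %| `|f|)%N -> False) /\
    N ^+ 2 = b1 * m ^+ 4 + c * f ^+ 4.
Proof.
move=> hc [M [e [N [nz EN]]]].
rewrite hc mulNr opprK in EN.
pose m0 : int := numq M * denq e.
pose f0 : int := numq e * denq M.
pose D : rat := (denq M * denq e)%:~R.
have hm0 : M * D = m0%:~R by rewrite /D /m0 !intrM mulrA -numqE.
have hf0 : e * D = f0%:~R by rewrite /D /f0 !intrM mulrCA -numqE mulrC.
have nz0 : (m0 != 0) || (f0 != 0).
  rewrite /m0 /f0 !mulf_eq0 !numq_eq0 !(negPf (denq_neq0 _)) !orbF.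
  by move: nz; rewrite xpair_eqE negb_and.
pose g := gcdz m0 f0.
have g0 : g != 0 by rewrite /g gcdz_eq0 negb_and.
pose m := (m0 %/ g)%Z.
pose f := (f0 %/ g)%Z.
have em : m * g = m0 := divzK (dvdz_gcdl m0 f0).
have ef : f * g = f0 := divzK (dvdz_gcdr m0 f0).
have G1 : gcdz m f = 1.
  apply: (mulIf g0); rewrite mul1r.
  have H := mulz_gcdl m f g; rewrite em ef in H.
  transitivity (gcdz m0 f0); last by [].
  by rewrite -H.
have cop : forall s : nat, prime s -> (s %| `|m|)%N -> (s %| `|f|)%N -> False.
  move=> s ps sm sf.
  have : (s %| gcdn `|m| `|f|)%N by rewrite dvdn_gcd sm sf.
  have -> : gcdn `|m| `|f| = 1%N by move: G1; rewrite /gcdz => -[].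
  by rewrite dvdn1 => /eqP s1; rewrite s1 in ps.
pose s' : rat := D / g%:~R.
have gq : (g%:~R : rat) != 0 by rewrite intr_eq0.
have hm : M * s' = m%:~R by rewrite /s' mulrA hm0 -em intrM mulfK.
have hf : e * s' = f%:~R by rewrite /s' mulrA hf0 -ef intrM mulfK.
have EN' : (N * s' ^+ 2) ^+ 2 = (b1 * m ^+ 4 + c * f ^+ 4)%:~R.
  have -> : ((b1 * m ^+ 4 + c * f ^+ 4)%:~R : rat) = b1%:~R * (m%:~R) ^+ 4 + c%:~R * (f%:~R) ^+ 4.
    by rewrite intrD !intrM.
  rewrite -hm -hf exprMn EN; ring.
have hN := rat_sq_int EN'.
exists m, f, (numq (N * s' ^+ 2)); split => //.
apply: (@intr_inj rat); rewrite -EN' {2}hN intrXn.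
by [].
Qed.


Lemma pipeline (p q k : nat) (w a b eps b1 : int) :
  prime p -> prime q -> (p %% 8 = 1)%N -> (q %% 4 = 3)%N -> legendre_is_one p q ->
  (k = 2 \/ k = q \/ k = 2 * q)%N ->
  (w = q%:Z \/ w = 2 \/ w = 1) ->
  (eps = 1 \/ eps = -1) ->
  ((a = eps /\ b = - (eps * p%:Z * w ^+ 2)) \/ (a = - (eps * p%:Z) /\ b = eps * w ^+ 2)) ->
  k%:Z * w = 2 * q%:Z ->
  b1 = k%:Z * a ->
  T_has_nontrivial_point p q b1 -> quartic_is_one k p.
Proof.
move=> pp pq p8 q4 leg hk hw he hab kw hb1 T.
have q1 := prime_gt1 pq.
have ab : a * b = - (p%:Z * w ^+ 2) by case: hab => -[-> ->]; case: he => ->; ring.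
have kpos : (0 < k)%N by case: hk => [->|[->|->]]; rewrite ?muln_gt0 ?prime_gt0.
have k0 : k%:Z != 0 by apply/eqP => -[e0]; rewrite e0 in kpos.
have a0 : a != 0.
  have p0 : p%:Z != 0 by apply/eqP => -[e0]; rewrite e0 in pp.
  case: hab => -[-> _]; case: he => ->; rewrite ?oppr_eq0 ?mul1r ?mulN1r ?opprK ?oner_eq0 //; rewrite ?muln1 // ?mul1n //.
have hc : ((4 * p%:R * q%:R ^+ 2 / b1%:~R) : rat) = - (k%:Z * b)%:~R.
  have I : - (k%:Z * b) * (k%:Z * a) = 4 * p%:Z * q%:Z ^+ 2.
    have -> : - (k%:Z * b) * (k%:Z * a) = - (k%:Z * k%:Z) * (a * b) by ring.
    rewrite ab.
    have -> : - (k%:Z * k%:Z) * - (p%:Z * w ^+ 2) = p%:Z * (k%:Z * w) ^+ 2 by ring.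
    rewrite kw; ring.
  have b10 : (b1%:~R : rat) != 0 by rewrite intr_eq0 hb1 mulf_neq0.
  apply: (mulIf b10); rewrite mulfVK // hb1 -intrN -intrM I.
  by rewrite !intrM.
have [m [f [N [cop EN]]]] := T_int hc T.
have EN2 : N ^+ 2 = k%:Z * (a * m ^+ 4 + b * f ^+ 4) by rewrite EN hb1; ring.
have Hs s : prime s -> (s %| k)%N -> (s %| `|N|)%N.
  move=> ps sk; have := Euclid_dvdX `|N| 2 ps; rewrite andbT => <-.
  by rewrite -abszX EN2 abszM dvdn_mulr.
have kN : (k %| `|N|)%N.
  case: hk => [e|[e|e]]; rewrite e.
  - by apply: Hs; rewrite ?e.
  - by apply: Hs; rewrite ?e.
  - have oq : odd q by rewrite (divn_eq q 4) q4 oddD oddM andbF.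
    rewrite Gauss_dvd ?coprime2n //; apply/andP; split; apply: Hs; rewrite ?e //.
    - exact: dvdn_mulr.
    - exact: dvdn_mull.
have /dvdzP [n en] : (k%:Z %| N)%Z := kN.
have E : k%:Z * n ^+ 2 = a * m ^+ 4 + b * f ^+ 4.
  apply: (mulfI k0); rewrite -EN2 en; ring.
exact: (gen pp pq p8 q4 leg hk hw he hab cop E).
Qed.


Ltac fin H := try tauto; try (by left; split); try (by right; split); try (by rewrite mulrC); try (by rewrite PoszM mulr1); by rewrite H ?PoszM; ring.

Theorem proposition4 (p q : nat) :
  prime p -> prime q -> (p %% 8 = 1)%N -> (q %% 4 = 3)%N ->
  legendre_is_one p q ->
  ((exists b1 : int, b1 \in [:: 2; -2; - 2 * p%:Z; 2 * p%:Z] /\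
        T_has_nontrivial_point p q b1) -> quartic_is_one 2 p) /\
  ((exists b1 : int, b1 \in [:: q%:Z; - q%:Z; - (p%:Z * q%:Z); p%:Z * q%:Z] /\
        T_has_nontrivial_point p q b1) -> quartic_is_one q p) /\
  ((exists b1 : int, b1 \in [:: 2 * q%:Z; - 2 * q%:Z; - 2 * p%:Z * q%:Z; 2 * p%:Z * q%:Z] /\
        T_has_nontrivial_point p q b1) -> quartic_is_one (2 * q) p).
Proof.
move=> pp pq p8 q4 leg.
have P := pipeline pp pq p8 q4 leg.
split; [|split].
- move=> [b1 [hb T]]; move: hb; rewrite !inE => /or4P[] /eqP hb.
  + apply: (P 2%N q%:Z 1 _ 1 b1) T; fin hb.
  + apply: (P 2%N q%:Z (-1) _ (-1) b1) T; fin hb.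
  + apply: (P 2%N q%:Z (- (1 * p%:Z)) _ 1 b1) T; fin hb.
  + apply: (P 2%N q%:Z (- ((-1) * p%:Z)) _ (-1) b1) T; fin hb.
- move=> [b1 [hb T]]; move: hb; rewrite !inE => /or4P[] /eqP hb.
  + apply: (P q 2 1 _ 1 b1) T; fin hb.
  + apply: (P q 2 (-1) _ (-1) b1) T; fin hb.
  + apply: (P q 2 (- (1 * p%:Z)) _ 1 b1) T; fin hb.
  + apply: (P q 2 (- ((-1) * p%:Z)) _ (-1) b1) T; fin hb.
- move=> [b1 [hb T]]; move: hb; rewrite !inE => /or4P[] /eqP hb.
  + apply: (P (2 * q)%N 1 1 _ 1 b1) T; fin hb.
  + apply: (P (2 * q)%N 1 (-1) _ (-1) b1) T; fin hb.
  + apply: (P (2 * q)%N 1 (- (1 * p%:Z)) _ 1 b1) T; fin hb.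
  + apply: (P (2 * q)%N 1 (- ((-1) * p%:Z)) _ (-1) b1) T; fin hb.
Qed.
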